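(* Let $\mathcal{C}$ be a category (no limits or colimits are assumed to exist). For every internal groupoid $(C_0,C_1,C_2,d,c,e,m,\pi_1,\pi_2,i)$ in $\mathcal{C}$, define $\theta=\langle i\pi_1,m\rangle\colon C_2\to C_2$ and $\varphi=\langle m,i\pi_2\rangle\colon C_2\to C_2$. Then $(\theta,\varphi,m\colon C_2\to C_1)$ is an involutive-2-link, and it satisfies $m\varphi=\pi_1$, $m\theta=\pi_2$, $\pi_1\varphi=m$, $\pi_1\theta=i\pi_1$, $\pi_2\varphi=i\pi_2$, $\pi_2\theta=m$. Moreover, the assignment sending such an internal groupoid to $(\theta,\varphi,m)$ and an internal functor $(f_0,f_1,f_2)$ to $f_1$ is a well-defined functor from the category of internal groupoids in $\mathcal{C}$ to the category of involutive-2-links in $\mathcal{C}$, and this functor is fully faithful.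
   Context: Notation: for morphisms $x,y\colon X\to C_1$ with $dx=cy$, $\langle x,y\rangle\colon X\to C_2$ denotes the unique morphism with $\pi_1\langle x,y\rangle=x$, $\pi_2\langle x,y\rangle=y$ (using the pullback below). Internal groupoid in a category $\mathcal{C}$: objects $C_0,C_1,C_2$ and morphisms $d,c\colon C_1\to C_0$, $e\colon C_0\to C_1$, $m,\pi_1,\pi_2\colon C_2\to C_1$, $i\colon C_1\to C_1$ such that: $de=1_{C_0}=ce$; $dm=d\pi_2$, $cm=c\pi_1$, $d\pi_1=c\pi_2$; $di=c$, $ci=d$, $i^2=1_{C_1}$, $ie=e$; the commutative square $d\pi_1=c\pi_2$ is a pullback square; $m\langle 1_{C_1},ed\rangle=1_{C_1}=m\langle ec,1_{C_1}\rangle$; $m\langle 1_{C_1},i\rangle=ec$ and $m\langle i,1_{C_1}\rangle=ed$; the cospan $d\pi_2\colon C_2\to C_0$, $c\colon C_1\to C_0$ can be completed to a pullback square $d\pi_2 p_1=c\,p_2$ with $p_1\colon C_3\to C_2$, $p_2\colon C_3\to C_1$; and $m(1\times m)=m(m\times 1)$, where $m\times 1=\langle mp_1,p_2\rangle\colon C_3\to C_2$ and $1\times m=\langle \pi_1p_1, m\langle\pi_2p_1,p_2\rangle\rangle\colon C_3\to C_2$. A morphism of internal groupoids (internal functor) is a triple $(f_0\colon C_0\to C_0',f_1\colon C_1\to C_1',f_2\colon C_2\to C_2')$ commuting with all the structure morphisms $d,c,e,m,\pi_1,\pi_2$ (and hence $i$). Involutive-2-link in $\mathcal{C}$: a triple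 $(\theta,\varphi,m)$ where $m\colon A\to B$ is a morphism and $\theta,\varphi\colon A\to A$ satisfy $\theta^2=\varphi^2=1_A$ and $\theta\varphi\theta=\varphi\theta\varphi$, and such that the three parallel morphisms $m,m\theta,m\varphi\colon A\to B$ are jointly monomorphic. A morphism from $(\theta,\varphi,m\colon A\to B)$ to $(\theta',\varphi',m'\colon A'\to B')$ is a morphism $f\colon B\to B'$ for which there exists $\bar f\colon A\to A'$ with $m'\bar f=fm$, $\theta'\bar f=\bar f\theta$, $\varphi'\bar f=\bar f\varphi$ (such $\bar f$ is then unique); composition is composition of the $f$'s. *)

(* Defs.v *)
Record Category := {
  Ob :> Type;
  Hom : Ob -> Ob -> Type;
  comp : forall {A B C : Ob}, Hom B C -> Hom A B -> Hom A C;
  idm : forall (A : Ob), Hom A A;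
  comp_assoc : forall (A B C D : Ob) (h : Hom C D) (g : Hom B C) (f : Hom A B),
      comp h (comp g f) = comp (comp h g) f;
  comp_id_l : forall (A B : Ob) (f : Hom A B), comp (idm B) f = f;
  comp_id_r : forall (A B : Ob) (f : Hom A B), comp f (idm A) = f
}.

Arguments Hom {c} _ _.
Arguments comp {c A B C} _ _.
Arguments idm {c} _.

Notation "g ∘ f" := (comp g f) (at level 40, left associativity).

Definition is_pullback {C : Category} {A B Z P : C}
  (f : Hom A Z) (g : Hom B Z) (p : Hom P A) (q : Hom P B) : Prop :=
  f ∘ p = g ∘ q /\
  forall (X : C) (x : Hom X A) (y : Hom X B), f ∘ x = g ∘ y ->
    exists! h : Hom X P, p ∘ h = x /\ q ∘ h = y.

(* The pairing <x,y> : X -> C2 (the unique morphism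
   with pi1<x,y> = x, pi2<x,y> = y, which exists by the pullback property) is
   used in the axioms through its defining equations: an equation
   "F(<x,y>) = G" is written "forall u, pi1 u = x -> pi2 u = y -> F u = G". *)
Record InternalGroupoid (C : Category) := {
  C0 : C; C1 : C; C2 : C;
  gd : Hom C1 C0; gc : Hom C1 C0; ge : Hom C0 C1;
  gm : Hom C2 C1; gp1 : Hom C2 C1; gp2 : Hom C2 C1;
  gi : Hom C1 C1;
  ax_de : gd ∘ ge = idm C0;
  ax_ce : gc ∘ ge = idm C0;
  ax_dm : gd ∘ gm = gd ∘ gp2;
  ax_cm : gc ∘ gm = gc ∘ gp1;
  ax_di : gd ∘ gi = gc;
  ax_ci : gc ∘ gi = gd;
  ax_ii : gi ∘ gi = idm C1;
  ax_ie : gi ∘ ge = ge;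
  ax_pb : is_pullback gd gc gp1 gp2;   (* includes d pi1 = c pi2 *)
  ax_unit_r : forall u : Hom C1 C2,
      gp1 ∘ u = idm C1 -> gp2 ∘ u = ge ∘ gd -> gm ∘ u = idm C1;
  ax_unit_l : forall u : Hom C1 C2,
      gp1 ∘ u = ge ∘ gc -> gp2 ∘ u = idm C1 -> gm ∘ u = idm C1;
  ax_inv_r : forall u : Hom C1 C2,
      gp1 ∘ u = idm C1 -> gp2 ∘ u = gi -> gm ∘ u = ge ∘ gc;
  ax_inv_l : forall u : Hom C1 C2,
      gp1 ∘ u = gi -> gp2 ∘ u = idm C1 -> gm ∘ u = ge ∘ gd;
  C3 : C; q1 : Hom C3 C2; q2 : Hom C3 C1;
  ax_pb3 : is_pullback (gd ∘ gp2) gc q1 q2;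
  (* associativity  m (1 x m) = m (m x 1)  with
     m x 1 = <m q1, q2>,  1 x m = <pi1 q1, m <pi2 q1, q2>> *)
  ax_assoc : forall (a b v : Hom C3 C2),
      gp1 ∘ a = gm ∘ q1 -> gp2 ∘ a = q2 ->
      gp1 ∘ v = gp2 ∘ q1 -> gp2 ∘ v = q2 ->
      gp1 ∘ b = gp1 ∘ q1 -> gp2 ∘ b = gm ∘ v ->
      gm ∘ b = gm ∘ a
}.

Arguments C0 {C} _. Arguments C1 {C} _. Arguments C2 {C} _.
Arguments gd {C} _. Arguments gc {C} _. Arguments ge {C} _.
Arguments gm {C} _. Arguments gp1 {C} _. Arguments gp2 {C} _.
Arguments gi {C} _.

Definition is_internal_functor {C : Category} (G G' : InternalGroupoid C)
  (f0 : Hom (C0 G) (C0 G')) (f1 : Hom (C1 G) (C1 G')) (f2 : Hom (C2 G) (C2 G'))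
  : Prop :=
  gd G' ∘ f1 = f0 ∘ gd G /\
  gc G' ∘ f1 = f0 ∘ gc G /\
  ge G' ∘ f0 = f1 ∘ ge G /\
  gm G' ∘ f2 = f1 ∘ gm G /\
  gp1 G' ∘ f2 = f1 ∘ gp1 G /\
  gp2 G' ∘ f2 = f1 ∘ gp2 G.

Definition is_inv2link {C : Category} {A B : C}
  (theta phi : Hom A A) (m : Hom A B) : Prop :=
  theta ∘ theta = idm A /\
  phi ∘ phi = idm A /\
  theta ∘ phi ∘ theta = phi ∘ theta ∘ phi /\
  (forall (X : C) (x y : Hom X A),
      m ∘ x = m ∘ y -> m ∘ theta ∘ x = m ∘ theta ∘ y ->
      m ∘ phi ∘ x = m ∘ phi ∘ y -> x = y).

Definition is_inv2link_morphism {C : Category} {A B A' B' : C}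
  (theta phi : Hom A A) (m : Hom A B)
  (theta' phi' : Hom A' A') (m' : Hom A' B') (f : Hom B B') : Prop :=
  exists fbar : Hom A A',
    m' ∘ fbar = f ∘ m /\ theta' ∘ fbar = fbar ∘ theta /\ phi' ∘ fbar = fbar ∘ phi.

Definition is_theta {C : Category} (G : InternalGroupoid C) (t : Hom (C2 G) (C2 G)) :=
  gp1 G ∘ t = gi G ∘ gp1 G /\ gp2 G ∘ t = gm G.
Definition is_phi {C : Category} (G : InternalGroupoid C) (p : Hom (C2 G) (C2 G)) :=
  gp1 G ∘ p = gm G /\ gp2 G ∘ p = gi G ∘ gp2 G.

(* Main.v *)
Require Import Defs.

Lemma cR {C : Category} {A B Z W : C} {a : Hom B Z} {b : Hom A B} {k : Hom A Z} {x : Hom W A} :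
  a ∘ b = k -> a ∘ (b ∘ x) = k ∘ x.
Proof. intros H. rewrite comp_assoc, H. reflexivity. Qed.

Ltac ra := repeat rewrite <- comp_assoc.

Section Grp.
Variable C : Category.
Variable G : InternalGroupoid C.
Local Notation d := (gd G). Local Notation c := (gc G). Local Notation e := (ge G).
Local Notation m := (gm G). Local Notation p1 := (gp1 G). Local Notation p2 := (gp2 G).
Local Notation i := (gi G). Local Notation K1 := (C1 G). Local Notation K2 := (C2 G).

Lemma pb_comm : d ∘ p1 = c ∘ p2.
Proof. destruct (ax_pb _ G) as [H _]; exact H. Qed.

Lemma mono {X : C} (h h' : Hom X K2) : p1 ∘ h = p1 ∘ h' -> p2 ∘ h = p2 ∘ h' -> h = h'.
Proof.
  intros H1 H2. destruct (ax_pb _ G) as [Hc Hu].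
  destruct (Hu X (p1 ∘ h) (p2 ∘ h)) as [k [_ Hk]].
  { rewrite !comp_assoc, Hc. reflexivity. }
  rewrite <- (Hk h (conj eq_refl eq_refl)). apply Hk. split; symmetry; assumption.
Qed.

Lemma pair {X : C} (x y : Hom X K1) : d ∘ x = c ∘ y -> exists h, p1 ∘ h = x /\ p2 ∘ h = y.
Proof.
  intros H. destruct (ax_pb _ G) as [Hc Hu].
  destruct (Hu X x y H) as [k [Hk _]]. exists k; exact Hk.
Qed.

Lemma mono3 {X : C} (h h' : Hom X (C3 _ G)) : q1 _ G ∘ h = q1 _ G ∘ h' -> q2 _ G ∘ h = q2 _ G ∘ h' -> h = h'.
Proof.
  intros H1 H2. destruct (ax_pb3 _ G) as [Hc Hu].
  destruct (Hu X (q1 _ G ∘ h) (q2 _ G ∘ h)) as [k [_ Hk]].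
  { rewrite !comp_assoc, Hc. reflexivity. }
  rewrite <- (Hk h (conj eq_refl eq_refl)). apply Hk. split; symmetry; assumption.
Qed.

Lemma pair3 {X : C} (x : Hom X K2) (y : Hom X K1) : (d ∘ p2) ∘ x = c ∘ y ->
  exists h, q1 _ G ∘ h = x /\ q2 _ G ∘ h = y.
Proof.
  intros H. destruct (ax_pb3 _ G) as [Hc Hu].
  destruct (Hu X x y H) as [k [Hk _]]. exists k; exact Hk.
Qed.

Lemma lift {X : C} (u0 : Hom K1 K2) (a b : Hom K1 K1) (x : Hom X K1) (u : Hom X K2) :
  p1 ∘ u0 = a -> p2 ∘ u0 = b -> p1 ∘ u = a ∘ x -> p2 ∘ u = b ∘ x -> u = u0 ∘ x.
Proof.
  intros H1 H2 H3 H4. apply mono; rewrite comp_assoc; congruence.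
Qed.

Lemma unit_r' {X : C} (x : Hom X K1) (u : Hom X K2) :
  p1 ∘ u = x -> p2 ∘ u = e ∘ (d ∘ x) -> m ∘ u = x.
Proof.
  intros H1 H2.
  destruct (pair (idm K1) (e ∘ d)) as [u0 [G1 G2]].
  { rewrite comp_id_r, comp_assoc, ax_ce, comp_id_l. reflexivity. }
  rewrite (lift u0 _ _ x u G1 G2).
  - rewrite comp_assoc, (ax_unit_r _ G u0 G1 G2), comp_id_l. reflexivity.
  - rewrite comp_id_l; assumption.
  - rewrite <- comp_assoc; assumption.
Qed.

Lemma unit_l' {X : C} (x : Hom X K1) (u : Hom X K2) :
  p1 ∘ u = e ∘ (c ∘ x) -> p2 ∘ u = x -> m ∘ u = x.
Proof.
  intros H1 H2.
  destruct (pair (e ∘ c) (idm K1)) as [u0 [G1 G2]].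
  { rewrite comp_id_r, comp_assoc, ax_de, comp_id_l. reflexivity. }
  rewrite (lift u0 _ _ x u G1 G2).
  - rewrite comp_assoc, (ax_unit_l _ G u0 G1 G2), comp_id_l. reflexivity.
  - rewrite <- comp_assoc; assumption.
  - rewrite comp_id_l; assumption.
Qed.

Lemma inv_r' {X : C} (x : Hom X K1) (u : Hom X K2) :
  p1 ∘ u = x -> p2 ∘ u = i ∘ x -> m ∘ u = e ∘ (c ∘ x).
Proof.
  intros H1 H2.
  destruct (pair (idm K1) i) as [u0 [G1 G2]].
  { rewrite comp_id_r, ax_ci. reflexivity. }
  rewrite (lift u0 _ _ x u G1 G2).
  - rewrite comp_assoc, (ax_inv_r _ G u0 G1 G2), comp_assoc. reflexivity.
  - rewrite comp_id_l; assumption.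
  - assumption.
Qed.

Lemma inv_l' {X : C} (x : Hom X K1) (u : Hom X K2) :
  p1 ∘ u = i ∘ x -> p2 ∘ u = x -> m ∘ u = e ∘ (d ∘ x).
Proof.
  intros H1 H2.
  destruct (pair i (idm K1)) as [u0 [G1 G2]].
  { rewrite comp_id_r, ax_di. reflexivity. }
  rewrite (lift u0 _ _ x u G1 G2).
  - rewrite comp_assoc, (ax_inv_l _ G u0 G1 G2), comp_assoc. reflexivity.
  - assumption.
  - rewrite comp_id_l; assumption.
Qed.

Lemma assoc' {X : C} (x y z : Hom X K1) (uxy uyz ua ub : Hom X K2) :
  p1 ∘ uxy = x -> p2 ∘ uxy = y -> p1 ∘ uyz = y -> p2 ∘ uyz = z ->
  p1 ∘ ua = m ∘ uxy -> p2 ∘ ua = z -> p1 ∘ ub = x -> p2 ∘ ub = m ∘ uyz ->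
  m ∘ ua = m ∘ ub.
Proof.
  intros H1 H2 H3 H4 H5 H6 H7 H8.
  destruct (ax_pb3 _ G) as [Hc3 _].
  assert (Hdy : d ∘ y = c ∘ z).
  { rewrite <- H3, <- H4, !comp_assoc, pb_comm. reflexivity. }
  destruct (pair3 uxy z) as [t [T1 T2]].
  { rewrite <- comp_assoc, H2. exact Hdy. }
  destruct (pair (m ∘ q1 _ G) (q2 _ G)) as [a [A1 A2]].
  { rewrite comp_assoc, (ax_dm _ G). exact Hc3. }
  destruct (pair (p2 ∘ q1 _ G) (q2 _ G)) as [v [V1 V2]].
  { rewrite comp_assoc. exact Hc3. }
  destruct (pair (p1 ∘ q1 _ G) (m ∘ v)) as [b [B1 B2]].
  { rewrite !comp_assoc, pb_comm, (ax_cm _ G), <- !comp_assoc, V1. reflexivity. }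
  assert (E := ax_assoc _ G a b v A1 A2 V1 V2 B1 B2).
  assert (Ev : v ∘ t = uyz).
  { apply mono.
    - rewrite (cR V1), <- comp_assoc, T1, H2, H3. reflexivity.
    - rewrite (cR V2), T2, H4. reflexivity. }
  assert (Ea : a ∘ t = ua).
  { apply mono.
    - rewrite (cR A1), <- comp_assoc, T1, H5. reflexivity.
    - rewrite (cR A2), T2, H6. reflexivity. }
  assert (Eb : b ∘ t = ub).
  { apply mono.
    - rewrite (cR B1), <- comp_assoc, T1, H1, H7. reflexivity.
    - rewrite (cR B2), <- comp_assoc, Ev, H8. reflexivity. }
  rewrite <- Ea, <- Eb, !comp_assoc, E. reflexivity.
Qed.


Lemma inv_unique {X : C} (z x : Hom X K1) (u : Hom X K2) :
  p1 ∘ u = z -> p2 ∘ u = x -> m ∘ u = e ∘ (d ∘ x) -> z = i ∘ x.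
Proof.
  intros H1 H2 H3.
  assert (Hzx : d ∘ z = c ∘ x).
  { rewrite <- H1, <- H2, !comp_assoc, pb_comm. reflexivity. }
  destruct (pair x (i ∘ x)) as [w [W1 W2]].
  { rewrite comp_assoc, ax_ci. reflexivity. }
  assert (Hw := inv_r' x w W1 W2).
  destruct (pair (m ∘ u) (i ∘ x)) as [ua [A1 A2]].
  { rewrite comp_assoc, (ax_dm _ G), <- comp_assoc, H2, comp_assoc, ax_ci. reflexivity. }
  destruct (pair z (m ∘ w)) as [ub [B1 B2]].
  { rewrite Hw, comp_assoc, ax_ce, comp_id_l. exact Hzx. }
  assert (E := assoc' z x (i ∘ x) u w ua ub H1 H2 W1 W2 A1 A2 B1 B2).
  rewrite (unit_r' z ub B1) in E.
  2:{ rewrite B2, Hw, Hzx. reflexivity. }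
  rewrite (unit_l' (i ∘ x) ua) in E; auto.
  rewrite A1, H3, (comp_assoc _ _ _ _ _ c i), ax_ci. reflexivity.
Qed.

Lemma idem {X : C} (y : Hom X K1) (w : Hom X K2) :
  p1 ∘ w = y -> p2 ∘ w = y -> m ∘ w = y -> y = e ∘ (d ∘ y).
Proof.
  intros H1 H2 H3.
  assert (Hyy : d ∘ y = c ∘ y).
  { transitivity (d ∘ (p1 ∘ w)); [rewrite H1; reflexivity|]. transitivity (c ∘ (p2 ∘ w)); [|rewrite H2; reflexivity]. rewrite !comp_assoc, pb_comm. reflexivity. }
  destruct (pair (i ∘ y) y) as [u [U1 U2]].
  { rewrite comp_assoc, ax_di. reflexivity. }
  destruct (pair (m ∘ u) y) as [ua [A1 A2]].
  { rewrite comp_assoc, (ax_dm _ G), <- comp_assoc, U2. exact Hyy. }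
  assert (E := assoc' (i ∘ y) y y u w ua u U1 U2 H1 H2 A1 A2 U1 (eq_trans U2 (eq_sym H3))).
  rewrite (inv_l' y u U1 U2) in E.
  rewrite (unit_l' y ua) in E; auto.
  rewrite A1, (inv_l' y u U1 U2), Hyy. reflexivity.
Qed.

Section TP.
Variables (th ph : Hom K2 K2).
Hypothesis Hth : is_theta G th.
Hypothesis Hph : is_phi G ph.

Lemma m_phi : m ∘ ph = p1.
Proof.
  destruct Hph as [P1 P2].
  destruct (pair p2 (i ∘ p2)) as [w [W1 W2]].
  { rewrite comp_assoc, ax_ci. reflexivity. }
  assert (Hw := inv_r' p2 w W1 W2).
  destruct (pair p1 (m ∘ w)) as [ub [B1 B2]].
  { rewrite Hw, comp_assoc, ax_ce, comp_id_l. exact pb_comm. }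
  assert (E := assoc' p1 p2 (i ∘ p2) (idm K2) w ph ub (comp_id_r _ _ _ _) (comp_id_r _ _ _ _)
     W1 W2 (eq_trans P1 (eq_sym (comp_id_r _ _ _ _))) P2 B1 B2).
  rewrite E. apply unit_r'; auto. rewrite B2, Hw, pb_comm. reflexivity.
Qed.

Lemma m_theta : m ∘ th = p2.
Proof.
  destruct Hth as [P1 P2].
  destruct (pair (i ∘ p1) p1) as [u [U1 U2]].
  { rewrite comp_assoc, ax_di. reflexivity. }
  assert (Hu := inv_l' p1 u U1 U2).
  destruct (pair (m ∘ u) p2) as [ua [A1 A2]].
  { rewrite Hu, comp_assoc, ax_de, comp_id_l. exact pb_comm. }
  assert (E := assoc' (i ∘ p1) p1 p2 u (idm K2) ua th U1 U2
     (comp_id_r _ _ _ _) (comp_id_r _ _ _ _) A1 A2 P1 (eq_trans P2 (eq_sym (comp_id_r _ _ _ _)))).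
  rewrite <- E. apply unit_l'; auto. rewrite A1, Hu, pb_comm. reflexivity.
Qed.

Lemma link : is_inv2link th ph m.
Proof.
  destruct Hth as [T1 T2]. destruct Hph as [P1 P2].
  assert (Mp := m_phi). assert (Mt := m_theta).
  split; [|split; [|split]].
  - apply mono.
    + rewrite comp_id_r, comp_assoc, T1, <- comp_assoc, T1, comp_assoc, (ax_ii _ G), comp_id_l.
      reflexivity.
    + rewrite comp_id_r, comp_assoc, T2. exact Mt.
  - apply mono.
    + rewrite comp_id_r, comp_assoc, P1. exact Mp.
    + rewrite comp_id_r, comp_assoc, P2, <- comp_assoc, P2, comp_assoc, (ax_ii _ G), comp_id_l.
      reflexivity.
  - apply mono; ra;
      repeat (first [rewrite T1|rewrite T2|rewrite P1|rewrite P2|rewrite Mt|rewrite Mp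
                    |rewrite (cR T1)|rewrite (cR T2)|rewrite (cR P1)|rewrite (cR P2)
                    |rewrite (cR Mt)|rewrite (cR Mp)]; ra); reflexivity.
  - intros X x y E1 E2 E3. rewrite Mt in E2. rewrite Mp in E3. apply mono; assumption.
Qed.

End TP.

End Grp.

Lemma functor_inv {C : Category} (G G' : InternalGroupoid C) f0 f1 f2 :
  is_internal_functor G G' f0 f1 f2 -> gi G' ∘ f1 = f1 ∘ gi G.
Proof.
  intros (Fd & Fc & Fe & Fm & F1 & F2).
  destruct (pair C G (gi G) (idm _)) as [u0 [U1 U2]].
  { rewrite comp_id_r, (ax_di _ G). reflexivity. }
  assert (Hu := ax_inv_l _ G u0 U1 U2).
  symmetry. apply (inv_unique C G' (f1 ∘ gi G) f1 (f2 ∘ u0)).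
  - rewrite comp_assoc, F1, <- comp_assoc, U1. reflexivity.
  - rewrite comp_assoc, F2, <- comp_assoc, U2, comp_id_r. reflexivity.
  - rewrite comp_assoc, Fm, <- comp_assoc, Hu, comp_assoc, <- Fe, <- comp_assoc, <- Fd.
    reflexivity.
Qed.

Theorem proposition3p1 (C : Category) :
  (forall (G : InternalGroupoid C) (theta phi : Hom (C2 G) (C2 G)),
     is_theta G theta -> is_phi G phi ->
     is_inv2link theta phi (gm G) /\
     gm G ∘ phi = gp1 G /\ gm G ∘ theta = gp2 G /\
     gp1 G ∘ phi = gm G /\ gp1 G ∘ theta = gi G ∘ gp1 G /\
     gp2 G ∘ phi = gi G ∘ gp2 G /\ gp2 G ∘ theta = gm G) /\
  (forall (G G' : InternalGroupoid C) (theta phi : Hom (C2 G) (C2 G))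
          (theta' phi' : Hom (C2 G') (C2 G'))
          (f0 : Hom (C0 G) (C0 G')) (f1 : Hom (C1 G) (C1 G')) (f2 : Hom (C2 G) (C2 G')),
     is_theta G theta -> is_phi G phi -> is_theta G' theta' -> is_phi G' phi' ->
     is_internal_functor G G' f0 f1 f2 ->
     is_inv2link_morphism theta phi (gm G) theta' phi' (gm G') f1) /\
  (forall (G G' : InternalGroupoid C)
          (f0 g0 : Hom (C0 G) (C0 G')) (f1 : Hom (C1 G) (C1 G')) (f2 g2 : Hom (C2 G) (C2 G')),
     is_internal_functor G G' f0 f1 f2 -> is_internal_functor G G' g0 f1 g2 ->
     f0 = g0 /\ f2 = g2) /\
  (forall (G G' : InternalGroupoid C) (theta phi : Hom (C2 G) (C2 G))
          (theta' phi' : Hom (C2 G') (C2 G')) (f : Hom (C1 G) (C1 G')),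
     is_theta G theta -> is_phi G phi -> is_theta G' theta' -> is_phi G' phi' ->
     is_inv2link_morphism theta phi (gm G) theta' phi' (gm G') f ->
     exists (f0 : Hom (C0 G) (C0 G')) (f2 : Hom (C2 G) (C2 G')),
       is_internal_functor G G' f0 f f2).
Proof.
  split; [|split; [|split]].
  - intros G th ph Hth Hph.
    split; [apply link; assumption|].
    split; [apply (m_phi C G ph Hph)|].
    split; [apply (m_theta C G th Hth)|].
    destruct Hth, Hph. repeat split; assumption.
  - intros G G' th ph th' ph' f0 f1 f2 [T1 T2] [P1 P2] [T1' T2'] [P1' P2'] HF.
    assert (Fi := functor_inv G G' f0 f1 f2 HF).
    destruct HF as (Fd & Fc & Fe & Fm & F1 & F2).
    exists f2. split; [exact Fm|split].
    + apply mono.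
      * rewrite !comp_assoc, T1', <- !comp_assoc, F1, !comp_assoc, Fi, F1, <- !comp_assoc, T1.
        reflexivity.
      * rewrite !comp_assoc, T2', Fm, F2, <- comp_assoc, T2. reflexivity.
    + apply mono.
      * rewrite !comp_assoc, P1', Fm, F1, <- comp_assoc, P1. reflexivity.
      * rewrite !comp_assoc, P2', <- !comp_assoc, F2, !comp_assoc, Fi, F2, <- !comp_assoc, P2.
        reflexivity.
  - intros G G' f0 g0 f1 f2 g2 (Fd & Fc & Fe & Fm & F1 & F2) (Gd & Gc & Ge & Gm & G1 & G2).
    split.
    + rewrite <- (comp_id_r _ _ _ f0), <- (comp_id_r _ _ _ g0), <- (ax_de _ G), !comp_assoc,
        <- Fd, <- Gd. reflexivity.
    + apply mono; congruence.
  - intros G G' th ph th' ph' f Hth Hph Hth' Hph' [fb [Mf [Tf Pf]]].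
    assert (F1 : gp1 G' ∘ fb = f ∘ gp1 G).
    { rewrite <- (m_phi C G' ph' Hph'), <- comp_assoc, Pf, comp_assoc, Mf, <- comp_assoc,
        (m_phi C G ph Hph). reflexivity. }
    assert (F2 : gp2 G' ∘ fb = f ∘ gp2 G).
    { rewrite <- (m_theta C G' th' Hth'), <- comp_assoc, Tf, comp_assoc, Mf, <- comp_assoc,
        (m_theta C G th Hth). reflexivity. }
    destruct (pair C G (idm _) (ge G ∘ gd G)) as [u0 [U1 U2]].
    { rewrite comp_id_r, comp_assoc, (ax_ce _ G), comp_id_l. reflexivity. }
    assert (Hu0 := ax_unit_r _ G u0 U1 U2).
    destruct (pair C G (ge G ∘ gc G) (idm _)) as [u1 [V1 V2]].
    { rewrite comp_id_r, comp_assoc, (ax_de _ G), comp_id_l. reflexivity. }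
    assert (Hu1 := ax_unit_l _ G u1 V1 V2).
    destruct (pair C G (ge G) (ge G)) as [w [W1 W2]].
    { rewrite (ax_de _ G), (ax_ce _ G). reflexivity. }
    assert (Hw : gm G ∘ w = ge G).
    { apply unit_r'; auto. rewrite W2, (ax_de _ G), comp_id_r. reflexivity. }
    assert (A1 : gp1 G' ∘ (fb ∘ w) = f ∘ ge G).
    { rewrite comp_assoc, F1, <- comp_assoc, W1. reflexivity. }
    assert (A2 : gp2 G' ∘ (fb ∘ w) = f ∘ ge G).
    { rewrite comp_assoc, F2, <- comp_assoc, W2. reflexivity. }
    assert (A3 : gm G' ∘ (fb ∘ w) = f ∘ ge G).
    { rewrite comp_assoc, Mf, <- comp_assoc, Hw. reflexivity. }
    assert (Hdc : gd G' ∘ (f ∘ ge G) = gc G' ∘ (f ∘ ge G)).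
    { transitivity (gd G' ∘ (gp1 G' ∘ (fb ∘ w))); [rewrite A1; reflexivity|].
      transitivity (gc G' ∘ (gp2 G' ∘ (fb ∘ w))); [|rewrite A2; reflexivity].
      rewrite !comp_assoc, (pb_comm C G'). reflexivity. }
    assert (Hid := idem C G' (f ∘ ge G) (fb ∘ w) A1 A2 A3).
    exists (gd G' ∘ (f ∘ ge G)), fb.
    split; [|split; [|split; [|split; [|split]]]]; try assumption.
    + transitivity (gd G' ∘ (f ∘ (gm G ∘ u0))).
      { rewrite Hu0, comp_id_r. reflexivity. }
      rewrite (comp_assoc _ _ _ _ _ f), <- Mf, !comp_assoc, (ax_dm _ G'), <- !comp_assoc,
        (cR F2); ra; rewrite U2; ra; reflexivity.
    + transitivity (gc G' ∘ (f ∘ (gm G ∘ u1))).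
      { rewrite Hu1, comp_id_r. reflexivity. }
      rewrite (comp_assoc _ _ _ _ _ f), <- Mf, !comp_assoc, (ax_cm _ G'), <- !comp_assoc,
        (cR F1); ra; rewrite V1.
      rewrite (comp_assoc _ _ _ _ _ f (ge G)), (comp_assoc _ _ _ _ _ (gc G')), <- Hdc; ra; reflexivity.
    + symmetry. exact Hid.
Qed.
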